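(* Let $f:X\to Y$ be a homomorphism of complex tori, where $X$ has dimension $g$ and period matrix $(\tau\ \ I_g)$ and $Y$ has dimension $h$ and period matrix $(\sigma\ \ I_h)$ (with $\det\operatorname{Im}\tau\ne0$, $\det\operatorname{Im}\sigma\neq0$). Write $F_X=\mathbb{Q}(\{\tau_{ij}\})$, $F_Y=\mathbb{Q}(\{\sigma_{ij}\})$, $\mathfrak{d}_X=[F_X:\mathbb{Q}]$, $\mathfrak{d}_Y=[F_Y:\mathbb{Q}]$. Then: (1) if $f$ has finite kernel, then $F_X\subseteq F_Y$, in particular $\mathfrak{d}_X\le\mathfrak{d}_Y$; (2) if $f$ is surjective, then $F_Y\subseteq F_X$, in particular $\mathfrak{d}_Y\le\mathfrak{d}_X$; (3) if $f$ is an isogeny, then $F_X=F_Y$ and $\mathfrak{d}_X=\mathfrak{d}_Y$; (4) $F_X=F_{X^\vee}$, where $X^\vee$ is the dual torus. In particular $F_X$ and $\mathfrak{d}_X$ depend only on $X$ (indeed only on its isogeny class), not on the chosen period matrix of the form $(\tau\ \ I_g)$.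
   Context: A complex torus of dimension $g$ with period matrix $\Pi=(\tau\ \ I_g)$ is $X=\mathbb{C}^g/\Lambda$, where $\Lambda$ is the lattice generated by the $2g$ columns of $\Pi$; every complex torus admits such a period matrix with $\det(\operatorname{Im}\tau)\neq0$. For such a period matrix set $F_X=\mathbb{Q}(\{\tau_{ij}\})\subseteq\mathbb{C}$ and $\mathfrak{d}_X=[F_X:\mathbb{Q}]\in\mathbb{N}\cup\{\infty\}$. *)

(* Defs.v *)
From HB Require Import structures.
From mathcomp Require Import all_boot all_order all_algebra.
From mathcomp Require Import complex.
From mathcomp Require Import boolp classical_sets reals.
Set Implicit Arguments.
Unset Strict Implicit.
Unset Printing Implicit Defensive.
Import Order.TTheory GRing.Theory Num.Theory.
Local Open Scope ring_scope.
Local Open Scope classical_set_scope.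

Section Tori.
Variable R : realType.
Local Notation C := (R[i]).

Definition normalized_period (g : nat) (tau : 'M[C]_g) : Prop :=
  \det (map_mx (@complex.Im R) tau) != 0.

(* The lattice Lambda_tau spanned by the 2g columns of (tau  I_g):
   v = tau a + b with a, b integer column vectors. *)
Definition in_lattice (g : nat) (tau : 'M[C]_g) (v : 'cV[C]_g) : Prop :=
  exists a b : 'cV[int]_g,
    v = tau *m map_mx (fun z : int => z%:~R) a + map_mx (fun z : int => z%:~R) b.

(* A homomorphism f : X = C^g/Lambda_tau -> Y = C^h/Lambda_sigma is given by its
   analytic representation, a C-linear map A : C^g -> C^h with A(Lambda_tau) in
   Lambda_sigma. *)
Definition torus_hom (g h : nat) (tau : 'M[C]_g) (sigma : 'M[C]_h)
  (A : 'M[C]_(h, g)) : Prop :=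
  forall v, in_lattice tau v -> in_lattice sigma (A *m v).

(* ker f = { v : A v in Lambda_sigma } / Lambda_tau is finite:
   finitely many classes modulo Lambda_tau. *)
Definition finite_kernel (g h : nat) (tau : 'M[C]_g) (sigma : 'M[C]_h)
  (A : 'M[C]_(h, g)) : Prop :=
  exists s : seq 'cV[C]_g, forall v, in_lattice sigma (A *m v) ->
    exists2 w, w \in s & in_lattice tau (v - w).

Definition surjective_hom (g h : nat) (sigma : 'M[C]_h) (A : 'M[C]_(h, g)) : Prop :=
  forall y : 'cV[C]_h, exists x : 'cV[C]_g, in_lattice sigma (A *m x - y).

Definition isogeny (g h : nat) (tau : 'M[C]_g) (sigma : 'M[C]_h)
  (A : 'M[C]_(h, g)) : Prop :=
  surjective_hom sigma A /\ finite_kernel tau sigma A.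

(* We identify the space Omega-bar of
   C-antilinear forms on C^g with C^g via c |-> l_c, l_c(v) = sum_i c_i conj(v_i)
   (a C-linear identification); the dual lattice is
   Lambda-hat = { l : Im l(Lambda) subset Z }. *)
Definition antilin_form (g : nat) (c v : 'cV[C]_g) : C :=
  \sum_(i < g) c i 0 * conjc (v i 0).

Definition in_dual_lattice (g : nat) (tau : 'M[C]_g) (c : 'cV[C]_g) : Prop :=
  forall v, in_lattice tau v -> exists z : int, complex.Im (antilin_form c v) = z%:~R.

(* (tau' I_g) is a normalized period matrix of the dual torus of X = C^g/Lambda_tau:
   there is a C-linear isomorphism M : C^g -> Omega-bar with M(Lambda_tau') = Lambda-hat. *)
Definition dual_period (g : nat) (tau tau' : 'M[C]_g) : Prop :=
  normalized_period tau' /\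
  exists2 M : 'M[C]_g, M \in unitmx &
    forall v, in_lattice tau' v <-> in_dual_lattice tau (M *m v).

Definition is_subfield (K : set C) : Prop :=
  [/\ K 0, K 1, (forall x y, K x -> K y -> K (x - y)),
      (forall x y, K x -> K y -> K (x * y)) & (forall x, K x -> K x^-1)].

Definition gen_field (S : set C) : set C :=
  fun z => forall K, is_subfield K -> S `<=` K -> K z.

Definition period_field (g : nat) (tau : 'M[C]_g) : set C :=
  gen_field (fun z => exists i j, z = tau i j).

(* [K : Q] in N u {oo}: None stands for infinity, Some n for the least n such
   that K is spanned over Q by n of its elements. *)
Definition Qspanned (K : set C) (n : nat) : Prop :=
  exists v : 'I_n -> C, (forall i, K (v i)) /\
    forall z, K z -> exists q : 'I_n -> rat, z = \sum_(i < n) ratr (q i) * v i.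

Definition Qdegree (K : set C) : option nat :=
  if `[< exists n, Qspanned K n >] then
    Some (xget 0%N (fun n => Qspanned K n /\ forall m, Qspanned K m -> (n <= m)%N))
  else None.

Definition period_degree (g : nat) (tau : 'M[C]_g) : option nat :=
  Qdegree (period_field tau).

End Tori.

Definition odeg_le (a b : option nat) : Prop :=
  match a, b with
  | _, None => True
  | None, Some _ => False
  | Some n, Some m => (n <= m)%N
  end.

(* Main.v *)
Require Import Defs.
From HB Require Import structures.
From mathcomp Require Import all_boot all_order all_algebra.
From mathcomp Require Import complex.
From mathcomp Require Import boolp classical_sets reals cardinality.
From mathcomp Require Import interval_inference ereal topology normedtype measure lebesgue_measure.
Set Implicit Arguments.
Unset Strict Implicit.
Unset Printing Implicit Defensive.
Import Order.TTheory GRing.Theory Num.Theory.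
Local Open Scope ring_scope.
Local Open Scope classical_set_scope.
Section Sub.
Variable R : realType.
Local Notation C := (R[i]).
Variable K : set C.
Hypothesis Kf : is_subfield K.

Definition kp : pred C := fun z => `[< K z >].

Lemma kp_divring : divring_closed kp.
Proof.
case: Kf => K0 K1 KB KM KV; split; rewrite /kp.
- by apply/asboolP.
- by move=> x y /asboolP ? /asboolP ?; apply/asboolP; auto.
- by move=> x y /asboolP ? /asboolP ?; apply/asboolP; auto.
Qed.
HB.instance Definition _ := GRing.isDivringClosed.Build C kp kp_divring.
Definition KT := {z : C | kp z}.
HB.instance Definition _ := [isSub of KT for (@sval C kp)].
HB.instance Definition _ := [Choice of KT by <:].
HB.instance Definition _ := [SubChoice_isSubComUnitRing of KT by <:].
HB.instance Definition _ := [SubComUnitRing_isSubIntegralDomain of KT by <:].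
HB.instance Definition _ := [SubIntegralDomain_isSubField of KT by <:].

Lemma kpP z : reflect (K z) (z \in kp).
Proof. exact: asboolP. Qed.

Definition mxK m n (A : 'M[C]_(m, n)) := forall i j, K (A i j).

Lemma mxK_add m n (A B : 'M[C]_(m, n)) : mxK A -> mxK B -> mxK (A + B).
Proof. by move=> hA hB i j; rewrite mxE; apply/kpP; rewrite rpredD //; apply/kpP. Qed.

Lemma mxK_opp m n (A : 'M[C]_(m, n)) : mxK A -> mxK (- A).
Proof. by move=> hA i j; rewrite mxE; apply/kpP; rewrite rpredN //; apply/kpP. Qed.

Lemma mxK_mul m n p (A : 'M[C]_(m, n)) (B : 'M[C]_(n, p)) :
  mxK A -> mxK B -> mxK (A *m B).
Proof.
move=> hA hB i j; rewrite mxE; apply/kpP; apply: rpred_sum => k _.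
by rewrite rpredM //; apply/kpP.
Qed.

Lemma mxK_int m n (A : 'M[int]_(m, n)) : mxK (map_mx (fun z : int => z%:~R) A).
Proof. by move=> i j; rewrite mxE; apply/kpP; apply: rpred_int. Qed.

Lemma mxK_aff m n p (S : 'M[C]_(m, n)) (a : 'M[int]_(n, p)) (c : 'M[int]_(m, p)) :
  mxK S -> mxK (S *m map_mx (fun z : int => z%:~R) a + map_mx (fun z : int => z%:~R) c).
Proof. by move=> hS; apply: mxK_add; [apply: mxK_mul => //|]; apply: mxK_int. Qed.

Lemma mxK_tr m n (A : 'M[C]_(m, n)) : mxK A -> mxK A^T.
Proof. by move=> hA i j; rewrite mxE. Qed.

Lemma mxK_inv n (A : 'M[C]_n) : mxK A -> mxK (invmx A).
Proof.
move=> hA.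
pose AK : 'M[KT]_n := \matrix_(i, j) insubd (0 : KT) (A i j).
have eA : map_mx val AK = A.
  by apply/matrixP => i j; rewrite !mxE insubdK //; apply/kpP.
rewrite -eA -map_invmx => i j; rewrite mxE; apply/kpP; exact: valP.
Qed.

Lemma K_left_inv m n (A : 'M[C]_(m, n)) : mxK A -> row_full A ->
  exists B : 'M[C]_(n, m), mxK B /\ B *m A = 1%:M.
Proof.
move=> hA hf.
pose AK : 'M[KT]_(m, n) := \matrix_(i, j) insubd (0 : KT) (A i j).
have eA : map_mx val AK = A.
  by apply/matrixP => i j; rewrite !mxE insubdK //; apply/kpP.
have : row_full AK by rewrite /row_full -(mxrank_map val) eA.
case/row_fullP => B hB; exists (map_mx val B); split.
  by move=> i j; rewrite mxE; apply/kpP; exact: valP.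
by rewrite -eA -map_mxM hB map_mx1.
Qed.

Lemma K_comb x y c : K x -> K y -> K (x - ratr c * y).
Proof.
by move=> /kpP hx /kpP hy; apply/kpP; rewrite rpredB // rpredM // rpred_rat.
Qed.

Lemma K_int (z : int) : K z%:~R.
Proof. by apply/kpP; apply: rpred_int. Qed.

End Sub.
Section Span.
Variable R : realType.
Local Notation C := (R[i]).

Lemma span_sub n : forall (v : 'I_n -> C) (P : set C),
  (forall x y c, P x -> P y -> P (x - ratr c * y)) ->
  (forall z, P z -> exists q : 'I_n -> rat, z = \sum_(i < n) ratr (q i) * v i) ->
  exists2 m, (m <= n)%N & Qspanned P m.
Proof.
elim: n => [|n IH] v P Pc Ps.
  exists 0%N => //; exists v; split; first by case.
  by move=> z /Ps [q ->]; exists q.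
pose P' z := P z /\ exists q : 'I_n -> rat, z = \sum_(i < n) ratr (q i) * v (lift ord0 i).
have P'c : forall x y c, P' x -> P' y -> P' (x - ratr c * y).
  move=> x y c [Px [qx ex]] [Py [qy ey]]; split; first exact: Pc.
  exists (fun i => qx i - c * qy i); rewrite ex ey mulr_sumr -sumrB; apply: eq_bigr => i _.
  by rewrite rmorphB rmorphM /= mulrBl mulrA.
have [m lemn [w [Pw Sw]]] := IH (fun i => v (lift ord0 i)) P' P'c (fun z => @proj2 _ _).
case: (pselect (forall z, P z -> P' z)) => [all|].
  exists m; first exact: leqW.
  exists w; split; first by move=> i; case: (Pw i).
  by move=> z /all /Sw.
move=> /existsNP [z0 /not_implyP [Pz0 nP'z0]].
have [q0 eq0] := Ps z0 Pz0.
have q00 : q0 ord0 != 0.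
  apply/negP => /eqP h; apply: nP'z0; split => //.
  exists (fun i => q0 (lift ord0 i)); rewrite eq0 big_ord_recl h rmorph0 mul0r add0r.
  by [].
exists m.+1 => //.
exists (fun i => if unlift ord0 i is Some j then w j else z0); split.
  by move=> i; case: unlift => [j|] //; case: (Pw j).
move=> z Pz; have [p ep] := Ps z Pz.
pose c := p ord0 / q0 ord0.
have P'zc : P' (z - ratr c * z0).
  split; first exact: Pc.
  exists (fun i => p (lift ord0 i) - c * q0 (lift ord0 i)).
  rewrite ep eq0 mulr_sumr -sumrB big_ord_recl.
  rewrite mulrA -rmorphM /= /c -mulrA mulVf // mulr1 subrr add0r.
  by apply: eq_bigr => i _; rewrite !(rmorphB, rmorphM, fmorphV) /= mulrBl !mulrA.
have [r er] := Sw _ P'zc.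
exists (fun i => if unlift ord0 i is Some j then r j else c).
rewrite big_ord_recl unlift_none.
under eq_bigr do rewrite liftK.
by rewrite -er addrC subrK.
Qed.

Lemma QdegreeP (K : set C) :
  (Qdegree K = None /\ ~ exists n, Qspanned K n) \/
  exists n, [/\ Qdegree K = Some n, Qspanned K n & forall m, Qspanned K m -> (n <= m)%N].
Proof.
rewrite /Qdegree; case: asboolP => [[n0 hn0]|hn]; last by left.
right.
have ex : exists n, Qspanned K n /\ forall m, Qspanned K m -> (n <= m)%N.
  pose pr := fun n => `[< Qspanned K n >].
  have exP : exists n, pr n by exists n0; apply/asboolP.
  exists (ex_minn exP); case: ex_minnP => k /asboolP hk hmin; split => // m hm.
  by apply: hmin; apply/asboolP.
have := xgetPex 0%N ex; set k := xget _ _ => -[hk1 hk2].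
by exists k; split.
Qed.

Lemma Qdeg_mono (K1 K2 : set C) :
  is_subfield K1 -> K1 `<=` K2 -> odeg_le (Qdegree K1) (Qdegree K2).
Proof.
move=> K1f sub.
case: (QdegreeP K2) => [[-> _]|[n2 [-> [v [Kv Sv]] _]]]; first by case: Qdegree.
have [m lem hm] : exists2 m, (m <= n2)%N & Qspanned K1 m.
  apply: (@span_sub n2 v K1) => [x y c|z /sub /Sv //].
  exact: K_comb.
case: (QdegreeP K1) => [[_ []]|[n1 [-> _ hmin]]]; first by exists m.
by rewrite /=; apply: leq_trans (hmin _ hm) lem.
Qed.

End Span.
Section Gen.
Variable R : realType.
Local Notation C := (R[i]).

Lemma gen_field_subfield (S : set C) : is_subfield (gen_field S).
Proof.
split.
- by move=> K [].
- by move=> K [].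
- by move=> x y hx hy K Kf SK; case: (Kf) => _ _ KB _ _; apply: KB; [apply: hx|apply: hy].
- by move=> x y hx hy K Kf SK; case: (Kf) => _ _ _ KM _; apply: KM; [apply: hx|apply: hy].
- by move=> x hx K Kf SK; case: (Kf) => _ _ _ _ KV; apply: KV; apply: hx.
Qed.

Lemma gen_field_ext (S : set C) : S `<=` gen_field S.
Proof. by move=> z Sz K _ SK; apply: SK. Qed.

Lemma gen_field_min (S K : set C) : is_subfield K -> S `<=` K -> gen_field S `<=` K.
Proof. by move=> Kf SK z; apply. Qed.

Lemma period_field_subfield g (tau : 'M[C]_g) : is_subfield (period_field tau).
Proof. exact: gen_field_subfield. Qed.

Lemma mxK_period g (tau : 'M[C]_g) : mxK (period_field tau) tau.
Proof. by move=> i j; apply: gen_field_ext; exists i, j. Qed.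

Lemma period_field_min g (tau : 'M[C]_g) (K : set C) :
  is_subfield K -> mxK K tau -> period_field tau `<=` K.
Proof. by move=> Kf hK; apply: gen_field_min => // z [i [j ->]]. Qed.

Lemma period_field_tr g (tau : 'M[C]_g) : period_field tau^T = period_field tau.
Proof.
rewrite /period_field; congr gen_field; apply/funext => z; apply/propext.
by split => -[i [j ->]]; exists j, i; rewrite mxE.
Qed.

Lemma R_uncountable : ~ countable [set: R].
Proof.
move=> cR.
have h := @countable_lebesgue_measure0 R `[0%R, 1%R] (sub_countable (subset_card_le (@subsetT _ _)) cR).
move: h; rewrite lebesgue_measure_itv /= lte_fin ltr01 /=.
by rewrite oppr0 adde0 => -[]; apply/eqP; rewrite oner_eq0.
Qed.

Lemma no_surj (T : countType) (F : T -> C) : ~ (forall z, exists t, F t = z).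
Proof.
move=> HF; apply: R_uncountable.
have sub : [set: R] `<=` (fun t => complex.Re (F t)) @` setT.
  by move=> r _; have [t Ht] := HF (r%:C)%C; exists t => //; rewrite Ht.
apply: sub_countable (subset_card_le sub) _.
exact: card_le_trans (card_image_le _ _) (countableP _).
Qed.

Local Notation zC := (fun z : int => (z%:~R : C)).

Lemma col_lattice g h (sigma : 'M[C]_h) (X : 'M[C]_(h, g)) :
  (forall j, in_lattice sigma (col j X)) ->
  exists a c : 'M[int]_(h, g), X = sigma *m map_mx zC a + map_mx zC c.
Proof.
move=> hX.
have H : forall j, exists p : 'cV[int]_h * 'cV[int]_h,
  col j X = sigma *m map_mx zC p.1 + map_mx zC p.2.
  by move=> j; have [a [b e]] := hX j; exists (a, b).
have [f hf] := choice H.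
exists (\matrix_(i, j) (f j).1 i 0), (\matrix_(i, j) (f j).2 i 0).
apply/matrixP => i j; move: (congr1 (fun M : 'cV[C]_h => M i 0) (hf j)); rewrite !mxE => ->.
by congr (_ + _); apply: eq_bigr => k _; rewrite !mxE.
Qed.

Lemma colM m n p (A : 'M[C]_(m, n)) (B : 'M[C]_(n, p)) j :
  col j (A *m B) = A *m col j B.
Proof. by apply/matrixP => i k; rewrite !mxE; apply: eq_bigr => l _; rewrite !mxE. Qed.

Lemma map_col1 n (j : 'I_n) : map_mx zC (col j 1%:M) = col j 1%:M.
Proof. by apply/matrixP => i k; rewrite !mxE; case: (i == j). Qed.

Lemma lattice_col g (tau : 'M[C]_g) j : in_lattice tau (col j tau).
Proof.
exists (col j 1%:M), 0; rewrite map_mx0 addr0 map_col1.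
by rewrite -colM mulmx1.
Qed.

Lemma lattice_e g (tau : 'M[C]_g) j : in_lattice tau (col j 1%:M).
Proof.
by exists 0, (col j 1%:M); rewrite map_mx0 mulmx0 add0r map_col1.
Qed.

Lemma hom_rel g h (tau : 'M[C]_g) (sigma : 'M[C]_h) (A : 'M[C]_(h, g)) :
  torus_hom tau sigma A ->
  exists a b c d : 'M[int]_(h, g),
    A *m tau = sigma *m map_mx zC a + map_mx zC c /\
    A = sigma *m map_mx zC b + map_mx zC d.
Proof.
move=> hA.
have [a [c e1]] := col_lattice (X := A *m tau) (fun j =>
   eq_ind _ (in_lattice sigma) (hA _ (lattice_col tau j)) _ (esym (colM _ _ _))).
have [b [d e2]] : exists b d : 'M[int]_(h, g), A = sigma *m map_mx zC b + map_mx zC d.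
  apply: col_lattice => j.
  have := hA _ (lattice_e tau j); by rewrite -colM mulmx1.
by exists a, b, c, d.
Qed.

End Gen.
Section Main.
Variable R : realType.
Local Notation C := (R[i]).
Local Notation zC := (fun z : int => (z%:~R : C)).
Definition cj m n (M : 'M[C]_(m, n)) := map_mx (@conjc R) M.

Lemma cj_int m n (a : 'M[int]_(m, n)) : cj (map_mx zC a) = map_mx zC a.
Proof. by apply/matrixP => i j; rewrite !mxE rmorph_int. Qed.

Lemma cjD m n (A B : 'M[C]_(m, n)) : cj (A + B) = cj A + cj B.
Proof. by apply/matrixP => i j; rewrite !mxE rmorphD. Qed.

Lemma cjB m n (A B : 'M[C]_(m, n)) : cj (A - B) = cj A - cj B.
Proof. by apply/matrixP => i j; rewrite !mxE rmorphB. Qed.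

Lemma cjM m n p (A : 'M[C]_(m, n)) (B : 'M[C]_(n, p)) : cj (A *m B) = cj A *m cj B.
Proof. exact: map_mxM. Qed.

Lemma cjK m n (A : 'M[C]_(m, n)) : cj (cj A) = A.
Proof. by apply/matrixP => i j; rewrite !mxE conjcK. Qed.

Lemma cj0 m n : cj (0 : 'M[C]_(m, n)) = 0.
Proof. by apply/matrixP => i j; rewrite !mxE conjc0. Qed.

Lemma D_unit n (tau : 'M[C]_n) : normalized_period tau -> tau - cj tau \in unitmx.
Proof.
move=> hn.
have -> : tau - cj tau = (2%:R * 'i%C) *: map_mx (real_complex R) (map_mx (@complex.Im R) tau).
  by apply/matrixP => i j; rewrite !mxE subcJ mulrAC.
rewrite unitmxE detZ det_map_mx unitfE mulf_neq0 //.
  by rewrite expf_neq0 // mulf_neq0 // ?pnatr_eq0 // eq_complex /= oner_eq0 andbF.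
by rewrite eq_complex /= eqxx andbT.
Qed.

Lemma field_incl1 g h (tau : 'M[C]_g) (sigma : 'M[C]_h) (A : 'M[C]_(h, g)) :
  torus_hom tau sigma A -> row_full A -> period_field tau `<=` period_field sigma.
Proof.
move=> hA hf.
have [a [b [c [d [e1 e2]]]]] := hom_rel hA.
have Kf := period_field_subfield sigma.
have AK : mxK (period_field sigma) A.
  by rewrite e2; apply: mxK_aff => //; exact: mxK_period.
have [B [BK BA]] := K_left_inv Kf AK hf.
have -> : tau = B *m (sigma *m map_mx zC a + map_mx zC c) by rewrite -e1 mulmxA BA mul1mx.
apply: period_field_min => //.
by apply: mxK_mul => //; apply: mxK_aff => //; exact: mxK_period.
Qed.

Lemma field_incl2 g h (tau : 'M[C]_g) (sigma : 'M[C]_h) (A : 'M[C]_(h, g)) :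
  normalized_period tau -> normalized_period sigma ->
  torus_hom tau sigma A -> (forall x : 'rV[C]_h, x *m A = 0 -> x = 0) ->
  period_field sigma `<=` period_field tau.
Proof.
move=> nt ns hA hinj.
have [a [b [c [d [e1 e2]]]]] := hom_rel hA.
pose N := map_mx zC a - map_mx zC b *m tau.
pose P := map_mx zC d *m tau - map_mx zC c.
have eSN : sigma *m N = P.
  rewrite /N /P mulmxBr mulmxA.
  have -> : sigma *m map_mx zC a = A *m tau - map_mx zC c by rewrite e1 addrK.
  have -> : sigma *m map_mx zC b = A - map_mx zC d by rewrite e2 addrK.
  by rewrite mulmxBl opprB addrA addrAC [X in X + _]addrAC subrr add0r addrC.
have eDN : (sigma - cj sigma) *m N = cj A *m (tau - cj tau).
  have h1 : A - cj A = (sigma - cj sigma) *m map_mx zC b.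
    by rewrite e2 cjD cjM !cj_int mulmxBl opprD addrACA subrr addr0.
  have h2 : A *m tau - cj A *m cj tau = (sigma - cj sigma) *m map_mx zC a.
    by rewrite -cjM e1 cjD cjM !cj_int mulmxBl opprD addrACA subrr addr0.
  by rewrite /N mulmxBr -h2 mulmxA -h1 mulmxBl mulmxBr opprB addrC addrA subrK.
have DU := D_unit ns; have EU := D_unit nt.
have Nfree : row_free N.
  apply: inj_row_free => x xN.
  pose y := x *m invmx (sigma - cj sigma).
  have yA : y *m cj A = 0.
    have H : y *m cj A *m (tau - cj tau) = 0.
      by rewrite -mulmxA -eDN /y -mulmxA (mulmxA (invmx _)) mulVmx // mul1mx.
    by rewrite -[y *m cj A]mulmx1 -(mulmxV EU) mulmxA H mul0mx.
  have y0 : y = 0.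
    have : cj y *m A = 0 by rewrite -[A]cjK -cjM yA cj0.
    by move/hinj => h0; rewrite -[y]cjK h0 cj0.
  by rewrite -[x]mulmx1 -(mulVmx DU) mulmxA -/y y0 mul0mx.
have Kf : is_subfield (period_field tau) by exact: period_field_subfield.
have tK : mxK (period_field tau) tau by exact: mxK_period.
have NK : mxK (period_field tau) N.
  apply: mxK_add => //; first exact: mxK_int.
  by apply: mxK_opp => //; apply: mxK_mul => //; exact: mxK_int.
have PK : mxK (period_field tau) P.
  apply: mxK_add => //; last by apply: mxK_opp => //; exact: mxK_int.
  by apply: mxK_mul => //; exact: mxK_int.
have NTf : row_full N^T by rewrite /row_full mxrank_tr.
have [B [BK BN]] := K_left_inv Kf (mxK_tr NK) NTf.
have NB : N *m B^T = 1%:M by rewrite -[N]trmxK -trmx_mul BN trmx1.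
have -> : sigma = P *m B^T by rewrite -eSN -mulmxA NB mulmx1.
apply: period_field_min => //; apply: mxK_mul => //; exact: mxK_tr.
Qed.

End Main.
Section Kern.
Variable R : realType.
Local Notation C := (R[i]).
Local Notation zC := (fun z : int => (z%:~R : C)).

Lemma lattice0 g (tau : 'M[C]_g) : in_lattice tau 0.
Proof. by exists 0, 0; rewrite !map_mx0 mulmx0 addr0. Qed.

Lemma fk_full g h (tau : 'M[C]_g) (sigma : 'M[C]_h) (A : 'M[C]_(h, g)) :
  finite_kernel tau sigma A -> row_full A.
Proof.
move=> [s hs]; rewrite /row_full -mxrank_tr.
apply: inj_row_free => v vA.
case: (eqVneq v 0) => // /rV0Pn [k vk]; exfalso.
have Au : A *m v^T = 0 by rewrite -[A]trmxK -trmx_mul vA trmx0.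
pose F (p : nat * ('cV[int]_g * 'cV[int]_g)) : C :=
  (nth 0 s p.1 + (tau *m map_mx zC p.2.1 + map_mx zC p.2.2)) k 0 / v 0 k.
apply: (@no_surj R _ F) => z.
have : in_lattice sigma (A *m (z *: v^T)) by rewrite -scalemxAr Au scaler0; exact: lattice0.
case/hs => w ws [a [b e]].
exists (index w s, (a, b)); rewrite /F /= nth_index // -e addrC subrK.
by rewrite !mxE mulfK.
Qed.

Lemma surj_inj g h (sigma : 'M[C]_h) (A : 'M[C]_(h, g)) :
  surjective_hom sigma A -> forall x : 'rV[C]_h, x *m A = 0 -> x = 0.
Proof.
move=> hs x xA.
case: (eqVneq x 0) => // /rV0Pn [k xk]; exfalso.
pose F (p : 'cV[int]_h * 'cV[int]_h) : C :=
  - (x *m (sigma *m map_mx zC p.1 + map_mx zC p.2)) 0 0 / x 0 k.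
apply: (@no_surj R _ F) => z.
have [v [a [b e]]] := hs (z *: col k 1%:M).
exists (a, b); rewrite /F /= -e mulmxBr mulmxA xA mul0mx sub0r.
by rewrite -scalemxAr mxE opprK mxE -colM mulmx1 mxE mulfK.
Qed.

End Kern.
Section Dual.
Variable R : realType.
Local Notation C := (R[i]).
Local Notation zC := (fun z : int => (z%:~R : C)).
Local Notation cj := (@cj R _ _).

Definition iota : C := 2%:R * 'i%C.

Lemma iota_neq0 : iota != 0.
Proof.
by rewrite /iota mulf_neq0 // ?pnatr_eq0 // eq_complex /= oner_eq0 andbF.
Qed.

Lemma conj_iota : conjc iota = - iota.
Proof. by rewrite /iota rmorphM /=; apply/eqP; simpc. Qed.

Definition Smx g (tau : 'M[C]_g) : 'M[C]_g :=
  map_mx (real_complex R) (map_mx (@complex.Im R) tau).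

Lemma cjtau g (tau : 'M[C]_g) : cj tau = tau - iota *: Smx tau.
Proof.
apply/matrixP => i j; rewrite !mxE /iota.
by rewrite mulrAC -subcJ opprB addrC subrK.
Qed.

Lemma cjS g (tau : 'M[C]_g) : cj (Smx tau) = Smx tau.
Proof. by apply/matrixP => i j; rewrite !mxE conjc_real. Qed.

Lemma S_unit g (tau : 'M[C]_g) : normalized_period tau -> Smx tau \in unitmx.
Proof.
by move=> hn; rewrite unitmxE det_map_mx unitfE eq_complex /= eqxx andbT.
Qed.

Lemma cjZ m n a (A : 'M[C]_(m, n)) : cj (a *: A) = conjc a *: cj A.
Proof. by apply/matrixP => i j; rewrite !mxE rmorphM. Qed.

Lemma cjT m n (A : 'M[C]_(m, n)) : cj A^T = (cj A)^T.
Proof. by apply/matrixP => i j; rewrite !mxE. Qed.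

Lemma cjV n (A : 'M[C]_n) : cj (invmx A) = invmx (cj A).
Proof. exact: map_invmx. Qed.

Lemma antilinE g (c w : 'cV[C]_g) : antilin_form c w = (c^T *m cj w) 0 0.
Proof. by rewrite /antilin_form !mxE; apply: eq_bigr => i _; rewrite !mxE. Qed.

Lemma Im_int (X : C) (z : int) : X - conjc X = iota * z%:~R -> complex.Im X = z%:~R.
Proof.
rewrite subcJ /iota mulrAC => /(mulfI (iota_neq0)) h.
apply: (@complexI R); rewrite h; by rewrite rmorph_int.
Qed.

End Dual.
Section Dual2.
Variable R : realType.
Local Notation C := (R[i]).
Local Notation zC := (fun z : int => (z%:~R : C)).
Local Notation cj := (@cj R _ _).

Lemma zC_tr m n (a : 'M[int]_(m, n)) : map_mx zC a^T = (map_mx zC a)^T.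
Proof. by apply/matrixP => i j; rewrite !mxE. Qed.

Lemma zC_M m n p (a : 'M[int]_(m, n)) (b : 'M[int]_(n, p)) :
  map_mx zC (a *m b) = map_mx zC a *m map_mx zC b.
Proof. by apply/matrixP => i j; rewrite !mxE rmorph_sum; apply: eq_bigr => k _; rewrite !mxE rmorphM. Qed.

Lemma zC_B m n (a b : 'M[int]_(m, n)) :
  map_mx zC (a - b) = map_mx zC a - map_mx zC b.
Proof. by apply/matrixP => i j; rewrite !mxE rmorphB. Qed.

Lemma dual_from g (tau : 'M[C]_g) (c : 'cV[C]_g) : normalized_period tau ->
  in_lattice tau^T ((Smx tau)^T *m c) -> in_dual_lattice tau c.
Proof.
move=> nt [m [n e]] w [a [b ew]].
have Su := S_unit nt.
set m' := map_mx zC m in e *; set n' := map_mx zC n in e *.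
set a' := map_mx zC a in ew *; set b' := map_mx zC b in ew *.
exists ((m^T *m b - n^T *m a) 0 0).
rewrite antilinE; apply: Im_int.
pose u := m'^T *m tau + n'^T.
have cT : c^T = u *m invmx (Smx tau).
  have -> : c = invmx (Smx tau)^T *m ((Smx tau)^T *m c) by rewrite mulmxA mulVmx ?mul1mx // unitmx_tr.
  by rewrite e trmx_mul trmx_inv trmxK /u raddfD /= trmx_mul trmxK.
have cjw : cj w = w - (iota R) *: ((Smx tau) *m a').
  by rewrite ew cjD cjM cjtau !cj_int mulmxBl -scalemxAl addrAC.
have cju : cj u = u - (iota R) *: (m'^T *m (Smx tau)).
  by rewrite /u cjD cjM cjT cjT !cj_int cjtau mulmxBr -scalemxAr addrAC.
have E1 : c^T *m cj w = u *m invmx (Smx tau) *m w - (iota R) *: (u *m a').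
  by rewrite cT cjw mulmxBr -scalemxAr mulmxA; congr (_ - _ *: (_ *m _)); apply: mulmxKV.
have E2 : cj (c^T *m cj w) = u *m invmx (Smx tau) *m w - (iota R) *: (m'^T *m w).
  rewrite cjM cjK cT cjM cjV cjS cju mulmxBl -scalemxAl (mulmxK Su).
  by rewrite mulmxBl -scalemxAl.
have E3 : c^T *m cj w - cj (c^T *m cj w) = (iota R) *: (m'^T *m b' - n'^T *m a').
  rewrite E2 E1 opprB addrC addrA subrK -scalerBr; congr (_ *: _).
  by rewrite ew /u mulmxDr mulmxDl mulmxA opprD addrA [m'^T *m tau *m a' + _]addrC addrK.
have := congr1 (fun M : 'M[C]_1 => M 0 0) E3; rewrite /= !mxE => ->.
rewrite /m' /n' /a' /b'; congr (_ * _); rewrite rmorphB !rmorph_sum; congr (_ - _);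
  by apply: eq_bigr => j _; rewrite !mxE rmorphM.
Qed.

End Dual2.
Section Dual3.
Variable R : realType.
Local Notation C := (R[i]).
Local Notation zC := (fun z : int => (z%:~R : C)).
Local Notation cj := (@cj R _ _).

Lemma conj_Im (X : C) (z : int) : complex.Im X = z%:~R -> conjc X = X - iota R * z%:~R.
Proof.
move=> h; rewrite /iota -(rmorph_int (real_complex R)) -h mulrAC -subcJ.
by rewrite opprB addrC subrK.
Qed.

Lemma antilin_e g (c : 'cV[C]_g) j : antilin_form c (col j 1%:M) = c j 0.
Proof.
rewrite /antilin_form (bigD1 j) //= big1 => [|i ij]; rewrite !mxE.
  by rewrite eqxx conjc1 mulr1 addr0.
by rewrite (negPf ij) conjc0 mulr0.
Qed.

Lemma antilin_col g (tau : 'M[C]_g) (c : 'cV[C]_g) j :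
  antilin_form c (col j tau) = (cj tau^T *m c) j 0.
Proof. by rewrite /antilin_form !mxE; apply: eq_bigr => i _; rewrite !mxE mulrC. Qed.

Lemma dual_to g (tau : 'M[C]_g) (c : 'cV[C]_g) : normalized_period tau ->
  in_dual_lattice tau c -> in_lattice tau^T ((Smx tau)^T *m c).
Proof.
move=> nt hd.
have hm : forall j, exists z : int, complex.Im (c j 0) = z%:~R.
  by move=> j; have [z hz] := hd _ (lattice_e tau j); exists z; rewrite -antilin_e.
have hq : forall j, exists z : int, complex.Im ((cj tau^T *m c) j 0) = z%:~R.
  by move=> j; have [z hz] := hd _ (lattice_col tau j); exists z; rewrite -antilin_col.
have [mf emf] := choice hm; have [qf eqf] := choice hq.
pose m := \col_j mf j; pose z := \col_j qf j.
exists m, (- z).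
set m' := map_mx zC m; set z' := map_mx zC z.
pose q := cj tau^T *m c.
have F1 : cj c = c - (iota R) *: m'.
  by apply/matrixP => i j; rewrite !mxE ord1 (conj_Im (emf i)).
have F2 : cj q = q - (iota R) *: z'.
  by apply/matrixP => i j; rewrite ord1 mxE (conj_Im (eqf i)) !mxE.
have E1 : q = tau^T *m c - (iota R) *: ((Smx tau)^T *m c).
  by rewrite /q cjT cjtau raddfB /= linearZ /= mulmxBl -scalemxAl.
have E2 : cj q = tau^T *m c - (iota R) *: (tau^T *m m').
  by rewrite /q cjM cjK F1 mulmxBr -scalemxAr.
have E3 : (iota R) *: z' = (iota R) *: (tau^T *m m' - (Smx tau)^T *m c).
  have -> : (iota R) *: z' = q - cj q by rewrite F2 opprB addrC subrK.
  by rewrite {1}E1 E2 opprB addrC addrA subrK scalerBr.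
have E4 : z' = tau^T *m m' - (Smx tau)^T *m c.
  have := congr1 (fun M => (iota R)^-1 *: M) E3; rewrite /= !scalerA mulVf ?iota_neq0 //.
  by rewrite !scale1r.
have -> : map_mx zC (- z) = - z' by apply/matrixP => i j; rewrite !mxE rmorphN.
by rewrite E4 opprB addrC subrK.
Qed.

End Dual3.
Lemma dual_iff (R : realType) g (tau : 'M[R[i]]_g) (c : 'cV[R[i]]_g) : normalized_period tau ->
  in_dual_lattice tau c <-> in_lattice tau^T ((Smx tau)^T *m c).
Proof. by move=> nt; split; [exact: dual_to|exact: dual_from]. Qed.

Lemma iso_field (R : realType) g (t1 t2 : 'M[R[i]]_g) Q : Q \in unitmx ->
  (forall v, in_lattice t1 v <-> in_lattice t2 (Q *m v)) ->
  period_field t1 = period_field t2.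
Proof.
move=> Qu hQ; apply/seteqP; split.
  apply: (@field_incl1 _ _ _ _ _ Q); first by move=> v /hQ.
  by rewrite row_full_unit.
apply: (@field_incl1 _ _ _ _ _ (invmx Q)).
  by move=> v hv; apply/hQ; rewrite mulmxA mulmxV ?mul1mx.
by rewrite row_full_unit unitmx_inv.
Qed.

Theorem proposition2p2 (R : realType) (g h : nat)
    (tau : 'M[R[i]]_g) (sigma : 'M[R[i]]_h) :
  normalized_period tau -> normalized_period sigma ->
  (forall A : 'M[R[i]]_(h, g), torus_hom tau sigma A ->
    [/\ (finite_kernel tau sigma A ->
           period_field tau `<=` period_field sigma /\
           odeg_le (period_degree tau) (period_degree sigma)),
        (surjective_hom sigma A ->
           period_field sigma `<=` period_field tau /\
           odeg_le (period_degree sigma) (period_degree tau)) &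
        (isogeny tau sigma A ->
           period_field tau = period_field sigma /\
           period_degree tau = period_degree sigma)]) /\
  ((exists tau' : 'M[R[i]]_g, dual_period tau tau') /\
   (forall tau' : 'M[R[i]]_g, dual_period tau tau' ->
      period_field tau = period_field tau')).
Proof.
move=> nt ns; split.
  move=> A hA.
  have I1 : finite_kernel tau sigma A -> period_field tau `<=` period_field sigma.
    by move=> fk; apply: field_incl1 hA (fk_full fk).
  have I2 : surjective_hom sigma A -> period_field sigma `<=` period_field tau.
    by move=> sj; apply: field_incl2 nt ns hA (surj_inj sj).
  split.
  - move=> fk; split; first exact: I1.
    by apply: Qdeg_mono; [exact: period_field_subfield|exact: I1].
  - move=> sj; split; first exact: I2.
    by apply: Qdeg_mono; [exact: period_field_subfield|exact: I2].
  - move=> [sj fk].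
    have e : period_field tau = period_field sigma by apply/seteqP; split; auto.
    by split => //; rewrite /period_degree e.
split.
  exists tau^T; split.
    by rewrite /normalized_period -map_trmx det_tr.
  exists (invmx (Smx tau)^T); first by rewrite unitmx_inv unitmx_tr S_unit.
  move=> v; rewrite dual_iff // mulmxA mulmxV ?mul1mx //.
  by rewrite unitmx_tr S_unit.
move=> t' [nt' [M Mu hM]].
have -> : period_field tau = period_field tau^T by rewrite period_field_tr.
apply/esym/(@iso_field _ _ _ _ ((Smx tau)^T *m M)).
  by rewrite unitmx_mul Mu unitmx_tr S_unit.
by move=> v; rewrite hM dual_iff // mulmxA.
Qed.
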